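(* Let $M=(\mathbf a,\mathbf p,0)$ be a TFM that is U-DSIC and 1-SCP, let $\theta_i:[0,1]^n\to\mathbb R$ ($i=1,\dots,n$) be functions, let $\tilde r:[0,1]^n\to\mathbb R$ be arbitrary, and define $\tilde M=(\mathbf a,\tilde{\mathbf p},\tilde r)$ by $\tilde p_i(b_i,\mathbf b_{-i})=p_i(b_i,\mathbf b_{-i})+\frac{\theta_i(b_i,\mathbf b_{-i})}{a_i(b_i,\mathbf b_{-i})}$. If for every $i$ and every $b_i$, \[\mathbb E_{\mathbf b_{-i}\sim V_{-i}}[\theta_i(b_i,\mathbf b_{-i})]=0,\] then $\tilde M$ is U-BNIC.
   Context: Users' valuations are drawn from a distribution $V$; $V_{-i}$ denotes the distribution of the other users' valuations (given $v_i$). A TFM $(\mathbf a,\mathbf p,r)$ consists of allocation probabilities $\mathbf a$, payments-if-confirmed $\mathbf p$, and miner revenue $r$, all functions of the bid vector. User utility: $u_i(b_i,\mathbf b_{-i};v_i)=a_i(b_i,\mathbf b_{-i})(v_i-p_i(b_i,\mathbf b_{-i}))$. U-DSIC: for all $i,v_i,\mathbf b_{-i}$, $v_i\in\arg\max_{b_i}u_i(b_i,\mathbf b_{-i};v_i)$. U-BNIC: for all $i,v_i$, $v_i\in\arg\max_{b_i}\mathbb E_{\mathbf b_{-i}\sim V_{-i}}[u_i(b_i,\mathbf b_{-i};v_i)]$ (others bidding truthfully). 1-SCP: for all $i,v_i,\mathbf b_{-i}$, $v_i\in\arg\max_{b_i}[u_i(b_i,\mathbf b_{-i};v_i)+r(b_i,\mathbf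 b_{-i})]$. *)

(* Defs.v *)
From HB Require Import structures.
From mathcomp Require Import all_boot all_order all_algebra.
From mathcomp Require Import all_classical all_reals all_analysis.
Set Implicit Arguments. Unset Strict Implicit. Unset Printing Implicit Defensive.
Import Order.TTheory GRing.Theory Num.Theory.
Local Open Scope ring_scope.

Section TFM.
Variables (R : realType) (n : nat).

Definition unitI (x : R) : Prop := 0 <= x <= 1.
Definition in_cube (b : 'I_n -> R) : Prop := forall j, unitI (b j).

(* (b_i, b_{-i}) : replace coordinate i of b by x *)
Definition upd (b : 'I_n -> R) (i : 'I_n) (x : R) : 'I_n -> R :=
  fun j => if j == i then x else b j.

(* A TFM (a, p, r): allocation probabilities, payments-if-confirmed, miner revenue *)
Record tfm := TFM {
  alloc : 'I_n -> ('I_n -> R) -> R;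
  pay   : 'I_n -> ('I_n -> R) -> R;
  rev   : ('I_n -> R) -> R }.

Definition util (M : tfm) (i : 'I_n) (b : 'I_n -> R) (v : R) : R :=
  alloc M i b * (v - pay M i b).

Definition UDSIC (M : tfm) : Prop :=
  forall (i : 'I_n) (vi bi : R) (b : 'I_n -> R),
    unitI vi -> unitI bi -> in_cube b ->
    util M i (upd b i bi) vi <= util M i (upd b i vi) vi.

Definition SCP1 (M : tfm) : Prop :=
  forall (i : 'I_n) (vi bi : R) (b : 'I_n -> R),
    unitI vi -> unitI bi -> in_cube b ->
    util M i (upd b i bi) vi + rev M (upd b i bi)
      <= util M i (upd b i vi) vi + rev M (upd b i vi).

(* V_{-i} given v_i: the law of the others' valuations [X i] under the
   probability [P i vi] on an abstract sample space T (coordinate i of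
   [X i w] is ignored). *)
Definition UBNIC d (T : measurableType d) (P : 'I_n -> R -> probability T R)
    (X : 'I_n -> T -> 'I_n -> R) (M : tfm) : Prop :=
  forall (i : 'I_n) (vi bi : R), unitI vi -> unitI bi ->
    (\int[P i vi]_w (util M i (upd (X i w) i bi) vi)%:E
      <= \int[P i vi]_w (util M i (upd (X i w) i vi) vi)%:E)%E.

End TFM.

(* Main.v *)
Require Import Defs.
From HB Require Import structures.
From mathcomp Require Import all_boot all_order all_algebra.
From mathcomp Require Import all_classical all_reals all_analysis.
Import Order.TTheory GRing.Theory Num.Theory.
Local Open Scope ring_scope.

Theorem mainTheorem8 (R : realType) (n : nat) (d : measure_display)
  (T : measurableType d) (P : 'I_n -> R -> probability T R)
  (X : 'I_n -> T -> 'I_n -> R)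
  (a p : 'I_n -> ('I_n -> R) -> R)
  (theta : 'I_n -> ('I_n -> R) -> R) (rt : ('I_n -> R) -> R) :
  (* the others' valuations lie in [0,1] *)
  (forall i w, in_cube (X i w)) ->
  (* allocation probabilities *)
  (forall i b, in_cube b -> 0 <= a i b <= 1) ->
  UDSIC (TFM a p (fun _ => 0)) ->
  SCP1 (TFM a p (fun _ => 0)) ->
  (* theta_i / a_i is well defined (0/0 read as 0) *)
  (forall i b, in_cube b -> a i b = 0 -> theta i b = 0) ->
  (* the expectations involved exist *)
  (forall i vi bi, unitI vi -> unitI bi ->
     (P i vi).-integrable setT (fun w => (theta i (upd (X i w) i bi))%:E)) ->
  (forall i vi bi, unitI vi -> unitI bi ->
     (P i vi).-integrable setT
       (fun w => (util (TFM a p (fun _ => 0)) i (upd (X i w) i bi) vi)%:E)) ->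
  (* E_{b_{-i} ~ V_{-i}} [theta_i(b_i, b_{-i})] = 0 *)
  (forall i vi bi, unitI vi -> unitI bi ->
     (\int[P i vi]_w (theta i (upd (X i w) i bi))%:E = 0)%E) ->
  UBNIC P X (TFM a (fun i b => p i b + theta i b / a i b) rt).
Proof.
move=> Xc ac UD _ th0 thint uint thE i vi bi hv hb.
have cube : forall x w, unitI x -> in_cube (upd (X i w) i x).
  by move=> x w hx j; rewrite /upd; case: ifP => // _; exact: Xc.
have eqU : forall x w, unitI x ->
   util (TFM a (fun i b => p i b + theta i b / a i b) rt) i (upd (X i w) i x) vi
   = util (TFM a p (fun _ => 0)) i (upd (X i w) i x) vi - theta i (upd (X i w) i x).
  move=> x w hx; rewrite /util /=.
  have [|a0] := eqVneq (a i (upd (X i w) i x)) 0.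
    by move=> a0; rewrite a0 (th0 _ _ (cube x w hx) a0) !mul0r subr0.
  move: a0; set A := a i _; set th := theta i _; set pp := p i _ => a0.
  by rewrite opprD addrA [in LHS]mulrBr [A * (th / A)]mulrCA mulfV // mulr1.
have intE : forall x, unitI x ->
   (\int[P i vi]_w (util (TFM a (fun i b => p i b + theta i b / a i b) rt) i (upd (X i w) i x) vi)%:E
    = \int[P i vi]_w (util (TFM a p (fun _ => 0)) i (upd (X i w) i x) vi)%:E)%E.
  move=> x hx.
  under eq_integral => w _ do rewrite eqU // EFinB.
  rewrite integralB_EFin //; last exact: thint.
  - by rewrite thE // sube0.
  - exact: uint.
rewrite !intE //.
apply: le_integral => //; [exact: uint|exact: uint|].
move=> w _; rewrite lee_fin; exact: UD.
Qed.
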